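(* Let $\mathcal A$ be a Von Neumann algebra in $\mathcal L(\mathcal H)$ and $U:\mathcal H\to\bigoplus_i(\mathcal H_L^i\otimes\mathcal H_R^i)$ a representation unitary for $\mathcal A$. Then the map $\chi_U:\mathcal H\to(\bigoplus_i\mathcal H_L^i)\otimes(\bigoplus_i\mathcal H_R^i)$, $x\mapsto Ux$ (followed by the natural inclusion $\bigoplus_i(\mathcal H_L^i\otimes\mathcal H_R^i)\hookrightarrow(\bigoplus_i\mathcal H_L^i)\otimes(\bigoplus_i\mathcal H_R^i)$), is a splitting map such that $\mathrm{stloc}_L(\chi_U)=\mathrm{loc}_L(\chi_U)=\mathcal A$ and $\mathrm{stloc}_R(\chi_U)=\mathrm{loc}_R(\chi_U)=\mathcal A'$.
   Context: All Hilbert spaces are finite-dimensional and complex. A Von Neumann algebra in $\mathcal L(\mathcal H)$ is a $*$-subalgebra closed under adjoint containing $\mathbb 1_{\mathcal H}$; $\mathcal A'$ is its commutant in $\mathcal L(\mathcal H)$. A representation unitary for $\mathcal A$ is a unitary $U:\mathcal H\to\bigoplus_i(\mathcal H_L^i\otimes\mathcal H_R^i)$ with $U\mathcal AU^\dagger=\bigoplus_i\mathcal L(\mathcal H_L^i)\otimes\mathbb 1_{\mathcal H_R^i}$. A splitting map on $\mathcal H$ is an isometry $\chi:\mathcal H\to\mathcal H_L^\chi\otimes\mathcal H_R^\chi$. $A\in\mathcal L(\mathcal H)$ is left $\chi$-local if $A=\chi^\dagger(\tilde A\otimes\mathbb 1)\chi$ for some $\tilde A\in\mathcal L(\mathcal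 H_L^\chi)$, and strictly left $\chi$-local if there is $\tilde A\in\mathcal L(\mathcal H_L^\chi)$ with $A\chi^\dagger=\chi^\dagger(\tilde A\otimes\mathbb 1)$ and $\chi A=(\tilde A\otimes\mathbb 1)\chi$; the sets are $\mathrm{loc}_L(\chi)$, $\mathrm{stloc}_L(\chi)$. The right versions $\mathrm{loc}_R(\chi)$, $\mathrm{stloc}_R(\chi)$ are defined in the same way with $\mathbb 1\otimes\tilde A$ for $\tilde A\in\mathcal L(\mathcal H_R^\chi)$. *)

(* Defs.v *)
(* Finite-dimensional complex Hilbert spaces are modelled as
   C^n (column vectors) with the standard inner product, over an arbitrary
   numClosedFieldType C (e.g. complex numbers); operators are 'M[C]_n. *)
From HB Require Import structures.
From mathcomp Require Import all_boot all_order all_algebra.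
From mathcomp Require Import mxtens.
Set Implicit Arguments. Unset Strict Implicit. Unset Printing Implicit Defensive.
Import Order.TTheory GRing.Theory Num.Theory.
Local Open Scope ring_scope.

Definition adj {C : numClosedFieldType} {m n : nat} (M : 'M[C]_(m, n)) : 'M[C]_(n, m) :=
  map_mx Num.conj (M^T).

Definition vN_algebra {C : numClosedFieldType} {n : nat} (A : 'M[C]_n -> Prop) : Prop :=
  [/\ A 1%:M,
      (forall a b, A a -> A b -> A (a + b)),
      (forall (c : C) a, A a -> A (c *: a)),
      (forall a b, A a -> A b -> A (a *m b))
    & (forall a, A a -> A (adj a))].

Definition commutant {C : numClosedFieldType} {n : nat} (A : 'M[C]_n -> Prop) : 'M[C]_n -> Prop :=
  fun b => forall a, A a -> a *m b = b *m a.

Definition unitary {C : numClosedFieldType} {m n : nat} (U : 'M[C]_(m, n)) : Prop :=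
  U *m adj U = 1%:M /\ adj U *m U = 1%:M.

Definition representation_unitary {C : numClosedFieldType} {n k : nat}
  (dL dR : 'I_k -> nat) (A : 'M[C]_n -> Prop)
  (U : 'M[C]_(\sum_(i < k) (dL i * dR i), n)) : Prop :=
  unitary U /\
  forall M : 'M[C]_(\sum_(i < k) (dL i * dR i)),
    (exists a, A a /\ M = U *m a *m adj U) <->
    (exists X : forall i : 'I_k, 'M[C]_(dL i),
        M = \mxdiag_(i < k) (X i *t (1%:M : 'M[C]_(dR i)))).

Definition splitting_map {C : numClosedFieldType} {dl dr n : nat}
  (chi : 'M[C]_(dl * dr, n)) : Prop := adj chi *m chi = 1%:M.

Definition locL {C : numClosedFieldType} {dl dr n : nat}
  (chi : 'M[C]_(dl * dr, n)) (a : 'M[C]_n) : Prop :=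
  exists At : 'M[C]_dl, a = adj chi *m (At *t (1%:M : 'M[C]_dr)) *m chi.

Definition stlocL {C : numClosedFieldType} {dl dr n : nat}
  (chi : 'M[C]_(dl * dr, n)) (a : 'M[C]_n) : Prop :=
  exists At : 'M[C]_dl,
    a *m adj chi = adj chi *m (At *t (1%:M : 'M[C]_dr)) /\
    chi *m a = (At *t (1%:M : 'M[C]_dr)) *m chi.

Definition locR {C : numClosedFieldType} {dl dr n : nat}
  (chi : 'M[C]_(dl * dr, n)) (a : 'M[C]_n) : Prop :=
  exists At : 'M[C]_dr, a = adj chi *m ((1%:M : 'M[C]_dl) *t At) *m chi.

Definition stlocR {C : numClosedFieldType} {dl dr n : nat}
  (chi : 'M[C]_(dl * dr, n)) (a : 'M[C]_n) : Prop :=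
  exists At : 'M[C]_dr,
    a *m adj chi = adj chi *m ((1%:M : 'M[C]_dl) *t At) /\
    chi *m a = ((1%:M : 'M[C]_dl) *t At) *m chi.

(* Natural inclusion \bigoplus_i (H_L^i (x) H_R^i) -> (\bigoplus_i H_L^i) (x) (\bigoplus_i H_R^i):
   the i-th block is  embL_i (x) embR_i,  where embL_i : H_L^i -> \bigoplus_j H_L^j is the
   canonical injection (i-th column block of the identity). *)
Definition sum_incl {C : numClosedFieldType} {k : nat} (dL dR : 'I_k -> nat) :
  'M[C]_((\sum_(i < k) dL i) * (\sum_(i < k) dR i), \sum_(i < k) (dL i * dR i)) :=
  \mxrow_(i < k)
    (submxrow (1%:M : 'M[C]_(\sum_(j < k) dL j)) i *t
     submxrow (1%:M : 'M[C]_(\sum_(j < k) dR j)) i).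

Definition chiU {C : numClosedFieldType} {n k : nat} (dL dR : 'I_k -> nat)
  (U : 'M[C]_(\sum_(i < k) (dL i * dR i), n)) :
  'M[C]_((\sum_(i < k) dL i) * (\sum_(i < k) dR i), n) :=
  sum_incl dL dR *m U.

Arguments representation_unitary {C n k} dL dR A U.
Arguments sum_incl {C k} dL dR.
Arguments chiU {C n k} dL dR U.

(* Main.v *)
Require Import Defs.
From HB Require Import structures.
From mathcomp Require Import all_boot all_order all_algebra.
From mathcomp Require Import mxtens.
Import Order.TTheory GRing.Theory Num.Theory.
Local Open Scope ring_scope.

Module Helpers.
Set Implicit Arguments. Unset Strict Implicit. Unset Printing Implicit Defensive.

Section Adj.
Variable C : numClosedFieldType.

Lemma hadjM m n p (A : 'M[C]_(m, n)) (B : 'M[C]_(n, p)) :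
  adj (A *m B) = adj B *m adj A.
Proof. by rewrite /adj trmx_mul map_mxM. Qed.

Lemma hadj1 n : adj (1%:M : 'M[C]_n) = 1%:M.
Proof. by rewrite /adj trmx1 map_scalar_mx rmorph1. Qed.

Lemma hadj0 m n : adj (0 : 'M[C]_(m, n)) = 0.
Proof. by rewrite /adj trmx0 map_mx0. Qed.

Lemma hadjK m n (A : 'M[C]_(m, n)) : adj (adj A) = A.
Proof. by apply/matrixP => i j; rewrite !mxE conjCK. Qed.

Lemma hadjT m n p q (A : 'M[C]_(m, n)) (B : 'M[C]_(p, q)) :
  adj (A *t B) = adj A *t adj B.
Proof. by rewrite /adj trmx_tens map_mxT. Qed.

Lemma tens11 p q : (1%:M : 'M[C]_p) *t (1%:M : 'M[C]_q) = 1%:M.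
Proof.
apply/matrixP => x y.
case: (mxtens_indexP x) => i1 i2; case: (mxtens_indexP y) => j1 j2.
rewrite tensmxE !mxE -natrM mulnb; congr (_ %:R); congr nat_of_bool.
apply/andP/eqP => [[/eqP -> /eqP ->] //|e].
move: (congr1 (@mxtens_unindex p q) e); rewrite !mxtens_indexK => -[-> ->]; by rewrite !eqxx.
Qed.

End Adj.

Section Blocks.
Variable C : numClosedFieldType.
Variables (k : nat) (p_ : 'I_k -> nat).
Notation sp := (\sum_(i < k) p_ i)%N.

Lemma diag_neq (B_ : forall i, 'M[C]_(p_ i)) i j :
  i != j -> submxblock (\mxdiag_i B_ i) i j = 0.
Proof. by move=> ne; rewrite /mxdiag mxblockK (negbTE ne). Qed.

Lemma one_diag : (1%:M : 'M[C]_sp) = \mxdiag_i (1%:M : 'M[C]_(p_ i)).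
Proof. by rewrite mxdiagZ. Qed.

Lemma blk1_eq i : submxblock (1%:M : 'M[C]_sp) i i = 1%:M.
Proof. by rewrite one_diag submxblock_diag. Qed.

Lemma blk1_neq i j : i != j -> submxblock (1%:M : 'M[C]_sp) i j = 0.
Proof. by move=> ne; rewrite one_diag diag_neq. Qed.

Lemma adj_row1 i : adj (submxrow (1%:M : 'M[C]_sp) i) = submxcol (1%:M : 'M[C]_sp) i.
Proof.
by apply/matrixP => a b; rewrite !mxE rmorph_nat eq_sym.
Qed.

Lemma compress (At : 'M[C]_sp) i j :
  adj (submxrow (1%:M : 'M[C]_sp) i) *m At *m submxrow (1%:M : 'M[C]_sp) j
  = submxblock At i j.
Proof.
by rewrite adj_row1 submxcol_mul mul1mx mul_submxrow mulmx1 submxblockEv.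
Qed.

Lemma diag_row (X_ : forall i, 'M[C]_(p_ i)) j :
  \mxdiag_i X_ i *m submxrow (1%:M : 'M[C]_sp) j
  = submxrow (1%:M : 'M[C]_sp) j *m X_ j.
Proof.
rewrite mul_submxrow mulmx1; apply/mxcolP => i.
rewrite -submxcol_mul -!submxblockEh.
case: (eqVneq i j) => [<-|ne]; first by rewrite submxblock_diag blk1_eq mul1mx.
by rewrite diag_neq // blk1_neq // mul0mx.
Qed.

Lemma mxdiag_mul (A_ B_ : forall i, 'M[C]_(p_ i)) :
  \mxdiag_i A_ i *m \mxdiag_i B_ i = \mxdiag_i (A_ i *m B_ i).
Proof.
rewrite {2}/mxdiag mul_mxdiag_mxblock; apply/mxblockP => i j.
rewrite mxblockK; case: (eqVneq i j) => [<-|ne].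
  by rewrite submxblock_diag conform_mx_id.
by rewrite diag_neq // mulmx0.
Qed.

Lemma adj_mxdiag (B_ : forall i, 'M[C]_(p_ i)) :
  adj (\mxdiag_i B_ i) = \mxdiag_i adj (B_ i).
Proof.
apply/mxblockP => i j.
have -> : submxblock (adj (\mxdiag_i B_ i)) i j = adj (submxblock (\mxdiag_i B_ i) j i).
  by apply/matrixP => a b; rewrite !mxE.
case: (eqVneq i j) => [<-|ne]; first by rewrite !submxblock_diag.
rewrite !diag_neq // 1?eq_sym //.
by apply/matrixP => a b; rewrite !mxE rmorph0.
Qed.

End Blocks.

Section Blocks2.
Variable C : numClosedFieldType.
Variables (k : nat) (p_ : 'I_k -> nat).

Lemma block_diag (B_ : forall i j, 'M[C]_(p_ i, p_ j)) :
  (forall i j, i != j -> B_ i j = 0) ->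
  \mxblock_(i, j) B_ i j = \mxdiag_i B_ i i.
Proof.
move=> H; apply/mxblockP => i j; rewrite mxblockK.
case: (eqVneq i j) => [<-|ne]; first by rewrite submxblock_diag.
by rewrite diag_neq // H.
Qed.

Lemma adj_mxrow m (B_ : forall i, 'M[C]_(m, p_ i)) :
  adj (\mxrow_i B_ i) = \mxcol_i adj (B_ i).
Proof. by apply/matrixP => a b; rewrite !mxE. Qed.

End Blocks2.

Section Incl.
Variable C : numClosedFieldType.
Variables (k : nat) (dL dR : 'I_k -> nat).
Notation sL := (\sum_(i < k) dL i)%N.
Notation sR := (\sum_(i < k) dR i)%N.
Notation S := (@sum_incl C k dL dR).

Lemma S_compress (At : 'M[C]_sL) (Bt : 'M[C]_sR) :
  adj S *m (At *t Bt) *m S =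
  \mxblock_(i, j) (submxblock At i j *t submxblock Bt i j).
Proof.
rewrite /sum_incl adj_mxrow mxcol_mul mul_mxcol_mxrow.
apply: eq_mxblock => i j.
by rewrite hadjT !tensmx_mul !compress.
Qed.

Lemma S_compressL (At : 'M[C]_sL) :
  adj S *m (At *t (1%:M : 'M[C]_sR)) *m S =
  \mxdiag_i (submxblock At i i *t (1%:M : 'M[C]_(dR i))).
Proof.
rewrite S_compress block_diag => [|i j ne]; last by rewrite blk1_neq // tensmx0.
by apply: eq_mxdiag => i; rewrite blk1_eq.
Qed.

Lemma S_compressR (Bt : 'M[C]_sR) :
  adj S *m ((1%:M : 'M[C]_sL) *t Bt) *m S =
  \mxdiag_i ((1%:M : 'M[C]_(dL i)) *t submxblock Bt i i).
Proof.
rewrite S_compress block_diag => [|i j ne]; last by rewrite blk1_neq // tens0mx.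
by apply: eq_mxdiag => i; rewrite blk1_eq.
Qed.

Lemma S_iso : adj S *m S = 1%:M.
Proof.
rewrite -[S in _ *m S]mul1mx -(@tens11 C sL sR) mulmxA S_compressL.
transitivity (\mxdiag_i (1%:M : 'M[C]_(dL i * dR i))); last by rewrite mxdiagZ.
by apply: eq_mxdiag => i; rewrite blk1_eq tens11.
Qed.

Lemma S_diagL (X_ : forall i, 'M[C]_(dL i)) :
  ((\mxdiag_i X_ i) *t (1%:M : 'M[C]_sR)) *m S =
  S *m \mxdiag_i (X_ i *t (1%:M : 'M[C]_(dR i))).
Proof.
rewrite /sum_incl mul_mxrow mul_mxrow_mxdiag; apply: eq_mxrow => i.
by rewrite !tensmx_mul diag_row mul1mx mulmx1.
Qed.

Lemma S_diagR (Y_ : forall i, 'M[C]_(dR i)) :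
  ((1%:M : 'M[C]_sL) *t (\mxdiag_i Y_ i)) *m S =
  S *m \mxdiag_i ((1%:M : 'M[C]_(dL i)) *t Y_ i).
Proof.
rewrite /sum_incl mul_mxrow mul_mxrow_mxdiag; apply: eq_mxrow => i.
by rewrite !tensmx_mul diag_row mul1mx mulmx1.
Qed.

End Incl.

Section TensComm.
Variable C : numClosedFieldType.
Variables p q : nat.
Notation idx := (@mxtens_index p q).

Lemma sum_tens (F : 'I_(p * q) -> C) :
  \sum_x F x = \sum_a \sum_b F (idx (a, b)).
Proof.
rewrite (pair_bigA _ (fun a b => F (idx (a, b)))).
rewrite (reindex idx) /=; last first.
  by exists (@mxtens_unindex p q) => x _; rewrite ?mxtens_indexK ?mxtens_unindexK.
by apply: eq_bigr => -[a b].
Qed.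

Lemma mulTl (Z : 'M[C]_p) (N : 'M[C]_(p * q)) i1 i2 y :
  ((Z *t (1%:M : 'M[C]_q)) *m N) (idx (i1, i2)) y =
  \sum_a Z i1 a * N (idx (a, i2)) y.
Proof.
rewrite mxE sum_tens; apply: eq_bigr => a _.
rewrite (bigD1 i2) //= big1 => [|b nb]; first by rewrite tensmxE mxE eqxx mulr1 addr0.
by rewrite tensmxE mxE eq_sym (negbTE nb) mulr0 mul0r.
Qed.

Lemma mulTr (Z : 'M[C]_p) (N : 'M[C]_(p * q)) x j1 j2 :
  (N *m (Z *t (1%:M : 'M[C]_q))) x (idx (j1, j2)) =
  \sum_a N x (idx (a, j2)) * Z a j1.
Proof.
rewrite mxE sum_tens; apply: eq_bigr => a _.
rewrite (bigD1 j2) //= big1 => [|b nb]; first by rewrite tensmxE mxE eqxx mulr1 addr0.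
by rewrite tensmxE mxE (negbTE nb) mulr0 mulr0.
Qed.

Definition ptr (N : 'M[C]_(p * q)) : 'M[C]_q :=
  \matrix_(a, b) (p%:R^-1 * \sum_r N (idx (r, a)) (idx (r, b))).

Lemma tens_commutant (N : 'M[C]_(p * q)) :
  (forall Z : 'M[C]_p, (Z *t (1%:M : 'M[C]_q)) *m N = N *m (Z *t (1%:M : 'M[C]_q))) ->
  N = (1%:M : 'M[C]_p) *t ptr N.
Proof.
move=> H.
have E : forall (r s i1 : 'I_p) (i2 : 'I_q) (j1 : 'I_p) (j2 : 'I_q),
    (i1 == r)%:R * N (idx (s, i2)) (idx (j1, j2)) =
    N (idx (i1, i2)) (idx (r, j2)) * (s == j1)%:R.
  move=> r s i1 i2 j1 j2.
  have := congr1 (fun M : 'M[C]_(p * q) => M (idx (i1, i2)) (idx (j1, j2))) (H (delta_mx r s)).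
  rewrite /= mulTl mulTr.
  rewrite (bigD1 s) //= big1 => [|a na]; last by rewrite mxE (negbTE na) andbF mul0r.
  rewrite (bigD1 r) //= [X in _ = _ + X]big1 => [|a na]; last by rewrite mxE (negbTE na) mulr0.
  by rewrite !mxE !eqxx andbT /= !addr0 => ->; rewrite eq_sym.
apply/matrixP => x y.
case: (mxtens_indexP x) => i1 i2; case: (mxtens_indexP y) => j1 j2.
rewrite tensmxE !mxE.
case: (eqVneq i1 j1) => [<-|ne]; last first.
  have := E i1 i1 i1 i2 j1 j2; rewrite eqxx (negbTE ne) mul1r mulr0 => ->.
  by rewrite mul0r.
rewrite mul1r.
have Ed : forall r, N (idx (r, i2)) (idx (r, j2)) = N (idx (i1, i2)) (idx (i1, j2)).
  by move=> r; have := E i1 r i1 i2 r j2; rewrite !eqxx mul1r mulr1.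
rewrite (eq_bigr _ (fun r _ => Ed r)) sumr_const card_ord.
rewrite -[X in _ * X]mulr_natl mulrA mulVf ?mul1r // pnatr_eq0 -lt0n.
exact: (leq_ltn_trans (leq0n i1) (ltn_ord i1)).
Qed.

End TensComm.

Section BlkComm.
Variable C : numClosedFieldType.
Variables (k : nat) (dL dR : 'I_k -> nat).
Notation sp := (\sum_(i < k) (dL i * dR i))%N.

Lemma blk_mul_diagl (D_ : forall i, 'M[C]_(dL i * dR i)) (M : 'M[C]_sp) i j :
  submxblock (\mxdiag_i D_ i *m M) i j = D_ i *m submxblock M i j.
Proof. by rewrite -{1}[M]submxblockK mul_mxdiag_mxblock mxblockK. Qed.

Lemma blk_mul_diagr (D_ : forall i, 'M[C]_(dL i * dR i)) (M : 'M[C]_sp) i j :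
  submxblock (M *m \mxdiag_i D_ i) i j = submxblock M i j *m D_ j.
Proof. by rewrite -{1}[M]submxblockK mul_mxblock_mxdiag mxblockK. Qed.

Lemma blk_commutant (M : 'M[C]_sp) :
  (forall X : forall i, 'M[C]_(dL i),
     \mxdiag_i (X i *t (1%:M : 'M[C]_(dR i))) *m M =
     M *m \mxdiag_i (X i *t (1%:M : 'M[C]_(dR i)))) ->
  M = \mxdiag_i ((1%:M : 'M[C]_(dL i)) *t ptr (submxblock M i i)).
Proof.
move=> H.
have Hb : forall (X : forall i, 'M[C]_(dL i)) i j,
    (X i *t (1%:M : 'M[C]_(dR i))) *m submxblock M i j =
    submxblock M i j *m (X j *t (1%:M : 'M[C]_(dR j))).
  move=> X i j.
  rewrite -(blk_mul_diagl (fun l => X l *t (1%:M : 'M[C]_(dR l)))).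
  by rewrite -(blk_mul_diagr (fun l => X l *t (1%:M : 'M[C]_(dR l)))) H.
apply/mxblockP => i j.
case: (eqVneq i j) => [<-|ne].
  rewrite submxblock_diag; apply: tens_commutant => Z.
  by have := Hb (fun l => conform_mx (0 : 'M[C]_(dL l)) Z) i i; rewrite conform_mx_id.
rewrite diag_neq //.
have := Hb (fun l => if l == i then (1%:M : 'M[C]_(dL l)) else 0) i j.
by rewrite eqxx eq_sym (negbTE ne) tens11 tens0mx mul1mx mulmx0.
Qed.

Lemma diag_commute (X_ : forall i, 'M[C]_(dL i)) (Y_ : forall i, 'M[C]_(dR i)) :
  \mxdiag_i (X_ i *t (1%:M : 'M[C]_(dR i))) *m \mxdiag_i ((1%:M : 'M[C]_(dL i)) *t Y_ i) =
  \mxdiag_i ((1%:M : 'M[C]_(dL i)) *t Y_ i) *m \mxdiag_i (X_ i *t (1%:M : 'M[C]_(dR i))).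
Proof.
rewrite (mxdiag_mul (fun i => X_ i *t (1%:M : 'M[C]_(dR i))) (fun i => (1%:M : 'M[C]_(dL i)) *t Y_ i)).
rewrite (mxdiag_mul (fun i => (1%:M : 'M[C]_(dL i)) *t Y_ i) (fun i => X_ i *t (1%:M : 'M[C]_(dR i)))).
by apply: eq_mxdiag => i; rewrite !tensmx_mul !mul1mx !mulmx1.
Qed.

End BlkComm.
End Helpers.
Import Helpers.

Theorem mainTheorem10 (C : numClosedFieldType) (n k : nat)
  (dL dR : 'I_k -> nat) (A : 'M[C]_n -> Prop)
  (U : 'M[C]_(\sum_(i < k) (dL i * dR i), n)) :
  vN_algebra A ->
  representation_unitary dL dR A U ->
  splitting_map (chiU dL dR U) /\
  (forall a : 'M[C]_n,
     (stlocL (chiU dL dR U) a <-> A a) /\ (locL (chiU dL dR U) a <-> A a)) /\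
  (forall a : 'M[C]_n,
     (stlocR (chiU dL dR U) a <-> commutant A a) /\
     (locR (chiU dL dR U) a <-> commutant A a)).
Proof.
move=> _ [[UU' U'U] HU].
rewrite /chiU.
set S := sum_incl dL dR.
have SS : adj S *m S = 1%:M by apply: S_iso.
have HA : forall a, A a -> exists X : forall i, 'M[C]_(dL i),
    U *m a *m adj U = \mxdiag_i (X i *t (1%:M : 'M[C]_(dR i))).
  by move=> a Aa; apply/(HU _).1; exists a.
have HD : forall X : forall i, 'M[C]_(dL i), exists b, A b /\
    \mxdiag_i (X i *t (1%:M : 'M[C]_(dR i))) = U *m b *m adj U.
  by move=> X; apply/(HU _).2; exists X.
have back : forall a, a = adj U *m (U *m a *m adj U) *m U.
  by move=> a; rewrite !mulmxA U'U mul1mx -mulmxA U'U mulmx1.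
have cancU : forall (X Y : 'M[C]_(\sum_(i < k) (dL i * dR i))),
    adj U *m X *m U *m adj U *m Y *m U = adj U *m (X *m Y) *m U.
  by move=> X Y; rewrite -[adj U *m X *m U *m adj U]mulmxA UU' mulmx1 !mulmxA.
have adjSU : adj (S *m U) = adj U *m adj S by rewrite hadjM.
have iso : adj (S *m U) *m (S *m U) = 1%:M.
  by rewrite adjSU mulmxA -[adj U *m adj S *m S]mulmxA SS mulmx1 U'U.
have st2loc : forall a T, a *m adj (S *m U) = adj (S *m U) *m T ->
    a = adj (S *m U) *m T *m (S *m U).
  by move=> a T e; rewrite -e -mulmxA iso mulmx1.
split; first exact: iso.
split=> a.
- have A2st : A a -> stlocL (S *m U) a.
    move=> /HA [X eX]; exists (\mxdiag_i X i).
    have aE : a = adj U *m \mxdiag_i (X i *t (1%:M : 'M[C]_(dR i))) *m U by rewrite -eX -back.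
    split.
    + rewrite aE adjSU -!mulmxA [U *m (adj U *m _)]mulmxA UU' mul1mx.
      have -> : \mxdiag_i X i *t (1%:M : 'M[C]_(\sum_(i < k) dR i)) =
                adj (\mxdiag_i adj (X i) *t (1%:M : 'M[C]_(\sum_(i < k) dR i))).
        by rewrite hadjT adj_mxdiag hadj1; congr (_ *t _); apply: eq_mxdiag => i; rewrite hadjK.
      rewrite -hadjM S_diagL hadjM adj_mxdiag; congr (_ *m (_ *m _)).
      by apply: eq_mxdiag => i; rewrite hadjT hadjK hadj1.
    + by rewrite aE !mulmxA -[S *m U *m adj U]mulmxA UU' mulmx1 S_diagL.
  have st2l : stlocL (S *m U) a -> locL (S *m U) a.
    by move=> [At [e1 _]]; exists At; apply: st2loc.
  have l2A : locL (S *m U) a -> A a.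
    move=> [At ->]; rewrite adjSU -!mulmxA [adj S *m _]mulmxA [adj S *m _ *m _]mulmxA.
    rewrite S_compressL.
    have [b [Ab eb]] := HD (fun i => submxblock At i i).
    by rewrite eb !mulmxA U'U mul1mx -mulmxA U'U mulmx1.
  by split; split=> //; [move=> /st2l /l2A | move=> /A2st].
- have c2st : commutant A a -> stlocR (S *m U) a.
    move=> ca.
    pose M := U *m a *m adj U.
    have cM : forall X : forall i, 'M[C]_(dL i),
        \mxdiag_i (X i *t (1%:M : 'M[C]_(dR i))) *m M =
        M *m \mxdiag_i (X i *t (1%:M : 'M[C]_(dR i))).
      move=> X; have [b [Ab ->]] := HD X; rewrite /M.
      rewrite !mulmxA -[U *m b *m adj U *m U]mulmxA U'U mulmx1.
      rewrite -[U *m a *m adj U *m U]mulmxA U'U mulmx1.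
      by rewrite -[U *m b *m a]mulmxA (ca b Ab) !mulmxA.
    have eM := blk_commutant cM.
    set Y := fun i => ptr (submxblock M i i) in eM.
    exists (\mxdiag_i Y i).
    have aE : a = adj U *m \mxdiag_i ((1%:M : 'M[C]_(dL i)) *t Y i) *m U.
      by rewrite -eM /M -back.
    split.
    + rewrite aE adjSU -!mulmxA [U *m (adj U *m _)]mulmxA UU' mul1mx.
      have -> : (1%:M : 'M[C]_(\sum_(i < k) dL i)) *t \mxdiag_i Y i =
                adj ((1%:M : 'M[C]_(\sum_(i < k) dL i)) *t \mxdiag_i adj (Y i)).
        by rewrite hadjT adj_mxdiag hadj1; congr (_ *t _); apply: eq_mxdiag => i; rewrite hadjK.
      rewrite -hadjM S_diagR hadjM adj_mxdiag; congr (_ *m (_ *m _)).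
      by apply: eq_mxdiag => i; rewrite hadjT hadjK hadj1.
    + by rewrite aE !mulmxA -[S *m U *m adj U]mulmxA UU' mulmx1 S_diagR.
  have st2l : stlocR (S *m U) a -> locR (S *m U) a.
    by move=> [At [e1 _]]; exists At; apply: st2loc.
  have l2c : locR (S *m U) a -> commutant A a.
    move=> [Bt ->] b /HA [X eX].
    have -> : adj (S *m U) *m ((1%:M : 'M[C]_(\sum_(i < k) dL i)) *t Bt) *m (S *m U) =
      adj U *m \mxdiag_i ((1%:M : 'M[C]_(dL i)) *t submxblock Bt i i) *m U.
      by rewrite hadjM -(@S_compressR _ _ dL dR Bt) !mulmxA.
    rewrite (back b) eX !mulmxA [LHS]cancU [RHS]cancU.
    by rewrite diag_commute.
  by split; split=> //; [move=> /st2l /l2c | move=> /c2st].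
Qed.
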